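(* Let $k\ge1$ and let $\Gamma\subset\mathbb{R}_+^k$ be a nonempty compact set of possible allocations. For every random valuation $X$ with values in $\mathbb{R}_+^k$ and finite expectation ($\mathbb{E}\|X\|<\infty$) there exists an allocation-monotonic (incentive compatible and individually rational) $\Gamma$-mechanism $\mu$ with $R(\mu;X)=\textsc{AMonRev}_\Gamma(X)$.
   Context: A $\Gamma$-mechanism $\mu=(q,s)$ consists of $q:\mathbb{R}_+^k\to\Gamma$ and $s:\mathbb{R}_+^k\to\mathbb{R}$; it is IC if $q(x)\cdot x-s(x)\ge q(y)\cdot x-s(y)$ for all $x,y\in\mathbb{R}_+^k$, and IR if $q(x)\cdot x-s(x)\ge0$ for all $x\in\mathbb{R}_+^k$. It is allocation monotonic if $q(y)\ge q(x)$ (coordinatewise) whenever $y\ge x$ (coordinatewise) in $\mathbb{R}_+^k$. The revenue is $R(\mu;X):=\mathbb{E}[s(X)]$, and $\textsc{AMonRev}_\Gamma(X)$ is the supremum of $R(\mu;X)$ over all allocation-monotonic IC and IR $\Gamma$-mechanisms $\mu$. *)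

(* Defs.v *)
From HB Require Import structures.
From mathcomp Require Import all_boot all_order all_algebra.
From mathcomp Require Import all_classical all_reals all_analysis.
Set Implicit Arguments. Unset Strict Implicit. Unset Printing Implicit Defensive.
Import Order.TTheory GRing.Theory Num.Theory.
Import numFieldNormedType.Exports.
Local Open Scope classical_set_scope.
Local Open Scope ring_scope.

Definition orthant (R : realType) (k : nat) : set 'rV[R]_k :=
  [set x | forall i : 'I_k, 0 <= x ord0 i].

Definition vle (R : realType) (k : nat) (x y : 'rV[R]_k) : Prop :=
  forall i : 'I_k, x ord0 i <= y ord0 i.

Definition dotv (R : realType) (k : nat) (q x : 'rV[R]_k) : R :=
  \sum_(i < k) q ord0 i * x ord0 i.

Definition is_mechanism (R : realType) (k : nat) (Gamma : set 'rV[R]_k)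
  (q : 'rV[R]_k -> 'rV[R]_k) (s : 'rV[R]_k -> R) : Prop :=
  forall x, orthant x -> Gamma (q x).

Definition IC (R : realType) (k : nat)
  (q : 'rV[R]_k -> 'rV[R]_k) (s : 'rV[R]_k -> R) : Prop :=
  forall x y, orthant x -> orthant y ->
    dotv (q x) x - s x >= dotv (q y) x - s y.

Definition IR (R : realType) (k : nat)
  (q : 'rV[R]_k -> 'rV[R]_k) (s : 'rV[R]_k -> R) : Prop :=
  forall x, orthant x -> dotv (q x) x - s x >= 0.

Definition alloc_monotonic (R : realType) (k : nat)
  (q : 'rV[R]_k -> 'rV[R]_k) : Prop :=
  forall x y, orthant x -> orthant y -> vle x y -> vle (q x) (q y).

Definition revenue (R : realType) (d : measure_display) (Omega : measurableType d)
  (P : probability Omega R) (k : nat) (X : Omega -> 'rV[R]_k)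
  (s : 'rV[R]_k -> R) : \bar R :=
  (\int[P]_w (s (X w))%:E)%E.

(* Admissible mechanisms for AMonRev: allocation-monotonic IC IR Gamma-mechanisms
   whose payment s(X) is a random variable (so that E[s(X)] makes sense). *)
Definition amon_admissible (R : realType) (d : measure_display) (Omega : measurableType d)
  (k : nat) (Gamma : set 'rV[R]_k) (X : Omega -> 'rV[R]_k)
  (q : 'rV[R]_k -> 'rV[R]_k) (s : 'rV[R]_k -> R) : Prop :=
  [/\ is_mechanism Gamma q s, IC q s, IR q s, alloc_monotonic q
    & measurable_fun setT (fun w => s (X w))].

Definition AMonRev (R : realType) (d : measure_display) (Omega : measurableType d)
  (P : probability Omega R) (k : nat) (Gamma : set 'rV[R]_k)
  (X : Omega -> 'rV[R]_k) : \bar R :=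
  ereal_sup [set revenue P X s | s in
     [set s | exists q, amon_admissible Gamma X q s]].

(* Main.v *)
Require Import Defs.
From HB Require Import structures.
From mathcomp Require Import all_boot all_order all_algebra.
From mathcomp Require Import all_classical all_reals all_analysis.
From mathcomp Require Import ring lra measurable_realfun.
Import Order.TTheory GRing.Theory Num.Theory.
Import numFieldNormedType.Exports.
Local Open Scope classical_set_scope.
Local Open Scope ring_scope.

Set Implicit Arguments. Unset Strict Implicit. Unset Printing Implicit Defensive.

Section diag.
Variable R : realType.

Lemma incr_ge (f : nat -> nat) : increasing_seq f -> forall n, (n <= f n)%N.
Proof.
move=> hf; elim=> [|n IH] //.
have : (f n < f n.+1)%N.
  rewrite ltnNge; apply/negP => h.
  have := hf n.+1 n; rewrite leEnat h => /esym; by rewrite ltnn.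
by move=> h; apply: leq_ltn_trans IH h.
Qed.

Fixpoint PhiSeq (E : (nat -> nat) -> nat -> nat -> nat) (j : nat) : nat -> nat :=
  match j with 0 => id | S j => fun n => PhiSeq E j (E (PhiSeq E j) j n) end.

Lemma PhiSeq_sub (E : (nat -> nat) -> nat -> nat -> nat) :
  (forall phi j n, (n <= E phi j n)%N) ->
  forall j m n, exists t, (n <= t)%N /\ PhiSeq E (j + m) n = PhiSeq E j t.
Proof.
move=> HE j; elim=> [|m IH] n; first by exists n; rewrite addn0.
rewrite addnS /=.
have [t [ht ->]] := IH (E (PhiSeq E (j + m)) (j + m) n).
by exists t; split => //; apply: leq_trans ht; apply: HE.
Qed.

Lemma diag_extract (a : nat -> nat -> R) :
  (forall j, exists M, forall n, `|a j n| <= M) ->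
  exists psi : nat -> nat, (forall n, (n <= psi n)%N) /\
    forall j, cvgn (fun n => a j (psi n)).
Proof.
move=> hb.
have ext : forall (phi : nat -> nat) j, exists f : nat -> nat,
    (forall n, (n <= f n)%N) /\ cvgn (fun n => a j (phi (f n))).
  move=> phi j.
  have [M hM] := hb j.
  have : bounded_fun (fun n => a j (phi n)).
    exists M; split; first exact: num_real.
    move=> x Mx y _ /=; apply: le_trans (hM _) _; exact: ltW.
  move=> /bolzano_weierstrass [f fi fc]; exists f; split => //.
  exact: incr_ge.
pose E phi j := projT1 (cid (ext phi j)).
have HE phi j n : (n <= E phi j n)%N by rewrite /E; case: cid => f [? ?].
have HC j : cvgn (fun n => a j (PhiSeq E j.+1 n)).
  by rewrite /=  /E; case: cid => f [? ?].
exists (fun n => PhiSeq E n.+1 n); split.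
  move=> n; have [t [ht]] := PhiSeq_sub HE 0 n.+1 n.
  by rewrite add0n => ->.
move=> j; have /cvg_ex [l hl] := HC j.
apply/cvg_ex; exists l => U /hl [N _ HN].
exists (maxn N j.+1) => // n /=; rewrite geq_max => /andP [hN hj].
have := PhiSeq_sub HE j.+1 (n.+1 - j.+1) n.
rewrite subnKC; last by apply: leq_trans hj _.
move=> [t [ht /= ->]]; apply: HN => /=; exact: leq_trans ht.
Qed.
End diag.

Section grid.
Variable R : realType.

Definition rmc (m : nat) (a : R) : R :=
  (Num.truncn (a * 2%:R ^+ m)).+1%:R / 2%:R ^+ m.

Let p_gt0 m : 0 < (2%:R : R) ^+ m.
Proof. by rewrite exprn_gt0. Qed.

Lemma rmc_gt m a : 0 <= a -> a < rmc m a.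
Proof.
move=> a0; rewrite /rmc ltr_pdivlMr //.
by have /andP[_ ->] := truncn_itv (mulr_ge0 a0 (ltW (p_gt0 m))).
Qed.

Lemma rmc_ge0 m a : 0 <= a -> 0 <= rmc m a.
Proof. by move=> a0; apply: ltW; apply: le_lt_trans (rmc_gt m a0). Qed.

Lemma rmc_le m a : 0 <= a -> rmc m a <= a + (2%:R ^+ m)^-1.
Proof.
move=> a0; rewrite /rmc ler_pdivrMr // mulrDl mulVf ?gt_eqF //.
have /andP[h _] := truncn_itv (mulr_ge0 a0 (ltW (p_gt0 m))).
by rewrite -natr1 lerD2r.
Qed.

Lemma rmc_S m a : 0 <= a -> rmc m.+1 a <= rmc m a.
Proof.
move=> a0; rewrite /rmc.
set t := Num.truncn (a * 2%:R ^+ m).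
set t' := Num.truncn (a * 2%:R ^+ m.+1).
have h1 : (t'%:R : R) < (2 * t.+1)%N%:R.
  have /andP[h _] := truncn_itv (mulr_ge0 a0 (ltW (p_gt0 m.+1))).
  apply: le_lt_trans h _.
  have /andP[_ h'] := truncn_itv (mulr_ge0 a0 (ltW (p_gt0 m))).
  rewrite exprS mulrCA natrM; rewrite ltr_pM2l //.
have h2 : (t'.+1 <= 2 * t.+1)%N by rewrite -(ltr_nat R).
rewrite ler_pdivrMr //.
have -> : (t.+1%:R / 2%:R ^+ m * 2%:R ^+ m.+1 : R) = (2 * t.+1)%N%:R.
  rewrite exprS natrM; have := p_gt0 m; move: (2%:R ^+ m : R) => P P0.
  field. by rewrite gt_eqF.
by rewrite ler_nat.
Qed.

Lemma rmc_mono m a b : 0 <= a -> a <= b -> rmc m a <= rmc m b.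
Proof.
move=> a0 ab; rewrite /rmc ler_pM2r ?invr_gt0 // ler_nat ltnS.
by apply: le_truncn; rewrite ler_pM2r.
Qed.

Lemma rmc_cvg a : 0 <= a -> (fun m => rmc m a) @ \oo --> a.
Proof.
move=> a0.
apply: (@squeeze_cvgr _ _ _ _ (cst a) (fun m => a + (2%:R^-1) ^+ m)).
- by near=> m; rewrite (ltW (rmc_gt m a0)) /= exprVn rmc_le.
- exact: cvg_cst.
- rewrite -[X in _ --> X]addr0; apply: cvgD; first exact: cvg_cst.
  apply: cvg_expr; rewrite ger0_norm ?invr_ge0 //.
  by rewrite invf_lt1 // ltr1n.
Unshelve. all: by end_near. Qed.

End grid.

Section mech.
Variables (R : realType) (k : nat).
Implicit Types (x y q : 'rV[R]_k).

Lemma orthant0 : orthant (0 : 'rV[R]_k).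
Proof. by move=> i; rewrite mxE. Qed.

Lemma dotv_ge0 q x : orthant q -> orthant x -> 0 <= dotv q x.
Proof. by move=> hq hx; apply: sumr_ge0 => i _; apply: mulr_ge0. Qed.

Lemma dotv_le q q' x : orthant x -> vle q q' -> dotv q x <= dotv q' x.
Proof. by move=> hx hq; apply: ler_sum => i _; apply: ler_wpM2r. Qed.

Lemma dotvx0 q : dotv q 0 = 0.
Proof. by apply: big1 => i _; rewrite mxE mulr0. Qed.

Lemma dotv_bound (B : R) q x : (forall i, q ord0 i <= B) -> orthant x ->
  dotv q x <= B * \sum_(i < k) x ord0 i.
Proof.
move=> hq hx; rewrite mulr_sumr; apply: ler_sum => i _; exact: ler_wpM2r.
Qed.

Variable Gamma : set 'rV[R]_k.
Hypothesis hGpos : Gamma `<=` orthant (k:=k).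

Lemma pay_mono (q : 'rV[R]_k -> 'rV[R]_k) (s : 'rV[R]_k -> R) :
  is_mechanism Gamma q s -> IC q s -> alloc_monotonic q ->
  forall x y, orthant x -> orthant y -> vle x y -> s x <= s y.
Proof.
move=> hm hic hmo x y hx hy hxy.
have h1 := hic x y hx hy.
have h2 : dotv (q x) x <= dotv (q y) x by apply: dotv_le => //; exact: hmo.
lra.
Qed.

Lemma s0_le0 (q : 'rV[R]_k -> 'rV[R]_k) (s : 'rV[R]_k -> R) :
  IR q s -> s 0 <= 0.
Proof. by move=> hir; have := hir 0 orthant0; rewrite dotvx0 sub0r oppr_ge0. Qed.

Lemma normalize_ok (q : 'rV[R]_k -> 'rV[R]_k) (s : 'rV[R]_k -> R) :
  is_mechanism Gamma q s -> IC q s -> IR q s ->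
  [/\ is_mechanism Gamma q (fun x => s x - s 0), IC q (fun x => s x - s 0) &
      IR q (fun x => s x - s 0)].
Proof.
move=> hm hic hir; split => //.
- move=> x y hx hy /=; have := hic x y hx hy; lra.
- move=> x hx /=; have := hic x 0 hx orthant0.
  have := dotv_ge0 (hGpos (hm _ orthant0)) hx; lra.
Qed.

End mech.

Section vec.
Variables (R : realType) (k : nat).

Lemma rV_cvg (v : nat -> 'rV[R]_k) (l : 'rV[R]_k) :
  (forall i, (fun n => v n ord0 i) @ \oo --> l ord0 i) -> v @ \oo --> l.
Proof.
move=> hv; apply/cvg_mx_entourageP => A entA.
apply: filter_forall => i; apply: filter_forall => j.
rewrite (ord1 i).
have H : \forall n \near \oo, A (l ord0 j, v n ord0 j).
  exact: ((cvg_entourageP _ _).1 (hv j) A entA).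
move: H; apply: filterS => n h /=; exact/mem_set.
Qed.

Lemma closed_rV_lim (G : set 'rV[R]_k) (v : nat -> 'rV[R]_k) (l : 'rV[R]_k) :
  closed G -> (forall n, G (v n)) ->
  (forall i, (fun n => v n ord0 i) @ \oo --> l ord0 i) -> G l.
Proof.
move=> cG hG hv; apply: (closed_cvg _ cG _ _ (rV_cvg hv)).
exact: nearW.
Qed.

Lemma dotv_cvg (a b : nat -> 'rV[R]_k) (la lb : 'rV[R]_k) :
  (forall i, (fun n => a n ord0 i) @ \oo --> la ord0 i) ->
  (forall i, (fun n => b n ord0 i) @ \oo --> lb ord0 i) ->
  (fun n => dotv (a n) (b n)) @ \oo --> dotv la lb.
Proof.
move=> ha hb; rewrite /dotv.
have cont : continuous (fun x : R * R => x.1 + x.2).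
  by move=> [x y]; apply: continuousD; [exact: cvg_fst|exact: cvg_snd].
exact: (@cvg_big R 'I_k +%R 0 (fun _ => true) cont nat \oo (index_enum 'I_k)
  (fun i n => a n ord0 i * b n ord0 i) (fun i => la ord0 i * lb ord0 i) _
  (fun i _ => cvgM (ha i) (hb i))).
Qed.

Lemma le_cvg_lim (u v : nat -> R) (a b : R) :
  u @ \oo --> a -> v @ \oo --> b -> (forall n, u n <= v n) -> a <= b.
Proof.
move=> hu hv huv.
by apply: (ler_cvg_to hu hv); exact: nearW.
Qed.

End vec.

Section gridv.
Variables (R : realType) (k : nat).

Definition gpt m (z : {ffun 'I_k -> nat}) : 'rV[R]_k :=
  \row_i ((z i).+1%:R / 2%:R ^+ m).
Definition rnd m (x : 'rV[R]_k) : {ffun 'I_k -> nat} :=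
  [ffun i => Num.truncn (x ord0 i * 2%:R ^+ m)].
Definition rmv m x := gpt m (rnd m x).

Lemma rmvE m x i : rmv m x ord0 i = rmc m (x ord0 i).
Proof. by rewrite /rmv /gpt mxE ffunE. Qed.

Lemma orthant_gpt m z : orthant (gpt m z).
Proof.
move=> i; rewrite mxE; apply: divr_ge0 => //; exact: exprn_ge0.
Qed.

Lemma rmv_ge x m : orthant x -> vle x (rmv m x).
Proof. by move=> hx i; rewrite rmvE; apply/ltW/rmc_gt. Qed.

Lemma rmv_S x m : orthant x -> vle (rmv m.+1 x) (rmv m x).
Proof. by move=> hx i; rewrite !rmvE; apply: rmc_S. Qed.

Lemma rmv_mono x y m : orthant x -> vle x y -> vle (rmv m x) (rmv m y).
Proof. by move=> hx hxy i; rewrite !rmvE; apply: rmc_mono. Qed.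

Lemma rmv_cvg x i : orthant x -> (fun m => rmv m x ord0 i) @ \oo --> x ord0 i.
Proof.
move=> hx; under eq_fun do rewrite rmvE; exact: rmc_cvg.
Qed.

Lemma rmv_le1 x m i : orthant x -> rmv m x ord0 i <= x ord0 i + 1.
Proof.
move=> hx; rewrite rmvE; apply: le_trans (rmc_le _ (hx i)) _.
rewrite lerD2l invf_le1 ?exprn_gt0 // exprn_ege1 // ler1n //.
Qed.

Lemma meas_grid d (Omega : measurableType d) (X : Omega -> 'rV[R]_k) :
  (forall i, measurable_fun setT (fun w => X w ord0 i)) ->
  (forall w, orthant (X w)) ->
  forall m (h : {ffun 'I_k -> nat} -> R),
  measurable_fun setT (fun w => h (rnd m (X w))).
Proof.
move=> hX hpos m h _ B mB; rewrite setTI.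
pose F (j : nat) : set Omega := match unpickle j with
  | Some z => if pselect (B (h z)) is left _ then [set w | rnd m (X w) = z]
              else set0
  | None => set0 end.
have -> : (fun w => h (rnd m (X w))) @^-1` B = \bigcup_(j in setT) F j.
  apply/seteqP; split => w /=.
    move=> Bw; exists (pickle (rnd m (X w))) => //.
    by rewrite /F pickleK; case: pselect.
  move=> [j _]; rewrite /F; case: (unpickle j) => [z|] //.
  by case: pselect => // Bz ->.
apply: bigcup_measurable => j _; rewrite /F.
case: (unpickle j) => [z|]; last exact: measurable0.
case: pselect => _; last exact: measurable0.
have p0 : 0 < (2%:R : R) ^+ m by rewrite exprn_gt0.
have -> : [set w | rnd m (X w) = z] = \bigcap_(i in setT)
    (setT `&` (fun w => X w ord0 i) @^-1`
      `[(z i)%:R / 2%:R ^+ m, (z i).+1%:R / 2%:R ^+ m[).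
  apply/seteqP; split => w /=.
    move=> <- i _; split => //=; rewrite ffunE in_itv /=.
    have /andP[h1 h2] := truncn_itv (mulr_ge0 (hpos w i) (ltW p0)).
    by rewrite ler_pdivrMr // ltr_pdivlMr // h1 h2.
  move=> H; apply/ffunP => i; rewrite ffunE.
  have [_ /=] := H i Logic.I; rewrite in_itv /= => /andP[h1 h2].
  apply: truncn_def; rewrite -ler_pdivrMr // -ltr_pdivlMr // h1 h2 //.
apply: fin_bigcap_measurable; first exact: finite_finset.
by move=> i _; apply: hX => //; exact: measurable_itv.
Qed.

End gridv.

Section integ.
Variables (R : realType) (d : measure_display) (Omega : measurableType d).
Variable (mu : {measure set Omega -> \bar R}).

Lemma cvgE (u : nat -> R) a : u @ \oo --> a -> (fun n => (u n)%:E) @ \oo --> a%:E.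
Proof. by move=> h; apply: cvg_EFin => //; exact: nearW. Qed.

Lemma dom_lim (F : nat -> Omega -> R) (f G : Omega -> R) (c : nat -> R) (a : R) :
  (forall n, measurable_fun setT (F n)) ->
  (forall w, (fun n => F n w) @ \oo --> f w) ->
  mu.-integrable setT (fun w => (G w)%:E) ->
  (forall n w, 0 <= F n w <= G w) ->
  (forall n, ((c n)%:E <= \int[mu]_w (F n w)%:E)%E) ->
  c @ \oo --> a ->
  (a%:E <= \int[mu]_w (f w)%:E)%E.
Proof.
move=> mF Ff iG FG hc ca.
have := @dominated_cvg _ _ _ mu setT measurableT (fun n w => (F n w)%:E)
  (fun w => (f w)%:E) (fun w => (G w)%:E).
move=> /(_ _ _ _ iG) H.
apply: (lee_cvg_to (cvgE ca) (H _ _ _ _)); last exact: nearW.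
- by move=> n; apply/measurable_EFinP.
- by move=> w _; apply: cvgE.
- by move=> w _.
- move=> n w _; have /andP[h1 h2] := FG n w.
  by rewrite lee_fin ger0_norm.
Qed.

End integ.

Section Xint.
Variables (R : realType) (k : nat) (d : measure_display) (Omega : measurableType d).
Variable (P : probability Omega R).
Variable X : Omega -> 'rV[R]_k.
Hypothesis hXmeas : forall i : 'I_k, measurable_fun setT (fun w => X w ord0 i).
Hypothesis hXint : (\int[P]_w (`|X w|)%:E < +oo)%E.

Lemma meas_big (I : Type) (r : seq I) (F : I -> Omega -> R) :
  (forall i, measurable_fun setT (F i)) ->
  measurable_fun setT (fun w => \big[Num.max/0]_(i <- r) F i w).
Proof.
move=> hF; elim: r => [|i r IH].
  by under eq_fun do rewrite big_nil; exact: measurable_cst.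
under eq_fun do rewrite big_cons.
exact: measurable_maxr.
Qed.

Lemma normE (x : 'rV[R]_k) : `|x| = \big[Num.max/0]_(ij : 'I_1 * 'I_k) `|x ij.1 ij.2|.
Proof. exact: mx_normrE. Qed.

Lemma norm_meas : measurable_fun setT (fun w => `|X w|).
Proof.
under eq_fun do rewrite normE.
apply: meas_big => ij; rewrite (ord1 ij.1).
by apply: measurableT_comp; [exact: normr_measurable|exact: hXmeas].
Qed.

Lemma coord_le_norm (x : 'rV[R]_k) i : `|x ord0 i| <= `|x|.
Proof.
rewrite normE.
exact: (le_bigmax _ (fun ij : 'I_1 * 'I_k => `|x ij.1 ij.2|) (ord0, i)).
Qed.

Lemma Xi_int i : P.-integrable setT (fun w => (X w ord0 i)%:E).
Proof.
apply/integrableP; split; first exact/measurable_EFinP.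
apply: le_lt_trans hXint.
apply: ge0_le_integral => //.
- by apply/measurable_EFinP; apply: measurableT_comp; [exact: normr_measurable|].
- by apply/measurable_EFinP; exact: norm_meas.
- by move=> w _; rewrite lee_fin coord_le_norm.
Qed.

Lemma G_int (B : R) :
  P.-integrable setT (fun w => (B * (\sum_(i < k) X w ord0 i) + B * k%:R)%:E).
Proof.
under eq_fun do rewrite EFinD EFinM -sumEFin.
apply: integrableD => //.
  apply: integrableZl => //.
  by apply: integrable_sum => // i _; exact: Xi_int.
exact: finite_measure_integrable_cst.
Qed.

End Xint.

Section construction.
Variables (R : realType) (k : nat) (Gamma : set 'rV[R]_k).
Hypothesis hGpos : Gamma `<=` orthant (k:=k).
Hypothesis hGc : closed Gamma.
Variable B : R.
Hypothesis hB : forall g, Gamma g -> forall i, g ord0 i <= B.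
Variables (qn : nat -> 'rV[R]_k -> 'rV[R]_k) (sn : nat -> 'rV[R]_k -> R).
Hypothesis hmech : forall n, is_mechanism Gamma (qn n) (sn n).
Hypothesis hIC : forall n, IC (qn n) (sn n).
Hypothesis hIR : forall n, IR (qn n) (sn n).
Hypothesis hmono : forall n, alloc_monotonic (qn n).
Hypothesis hs0 : forall n, sn n 0 = 0.

Lemma sn_ge0 n x : orthant x -> 0 <= sn n x.
Proof.
move=> hx; rewrite -(hs0 n); apply: (pay_mono (hmech n) (hIC n) (hmono n)) => //.
  exact: orthant0.
by move=> i; rewrite mxE; apply: hx.
Qed.

Lemma sn_le n x : orthant x -> sn n x <= B * \sum_(i < k) x ord0 i.
Proof.
move=> hx; have := hIR n hx; rewrite subr_ge0 => h; apply: le_trans h _.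
by apply: dotv_bound => //; apply: hB; apply: hmech.
Qed.

Lemma qn_ge0 n x i : orthant x -> 0 <= qn n x ord0 i.
Proof. by move=> hx; apply: hGpos; apply: hmech. Qed.

Lemma qn_le n x i : orthant x -> qn n x ord0 i <= B.
Proof. by move=> hx; apply: hB; apply: hmech. Qed.

Definition Ity := ((nat * {ffun 'I_k -> nat}) * option 'I_k)%type.

Definition aseq (j : nat) (n : nat) : R :=
  match @unpickle Ity j with
  | Some (mz, Some c) => qn n (gpt R mz.1 mz.2) ord0 c
  | Some (mz, None) => sn n (gpt R mz.1 mz.2)
  | None => 0 end.

Lemma aseq_bounded j : exists M, forall n, `|aseq j n| <= M.
Proof.
rewrite /aseq; case: (unpickle j) => [[mz [c|]]|].
- exists B => n; rewrite ger0_norm ?qn_ge0 ?qn_le //; exact: orthant_gpt.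
- exists (B * \sum_(i < k) gpt R mz.1 mz.2 ord0 i) => n.
  by rewrite ger0_norm ?sn_ge0 ?sn_le //; exact: orthant_gpt.
- by exists 0 => n; rewrite normr0.
Qed.

Definition psi : nat -> nat :=
  projT1 (cid (diag_extract aseq_bounded)).

Lemma psi_ge n : (n <= psi n)%N.
Proof. exact: (projT2 (cid (diag_extract aseq_bounded))).1 n. Qed.

Lemma psi_cvg j : cvgn (fun n => aseq j (psi n)).
Proof. exact: (projT2 (cid (diag_extract aseq_bounded))).2 j. Qed.

Definition QD (y : 'rV[R]_k) : 'rV[R]_k :=
  \row_c limn (fun n => qn (psi n) y ord0 c).
Definition SD (y : 'rV[R]_k) : R := limn (fun n => sn (psi n) y).

Definition grid (y : 'rV[R]_k) := exists m z, y = gpt R m z.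

Lemma grid_orthant y : grid y -> orthant y.
Proof. by move=> [m [z ->]]; apply: orthant_gpt. Qed.

Lemma grid_rmv m x : grid (rmv m x).
Proof. by exists m, (rnd m x). Qed.

Lemma cvgQD y c : grid y ->
  (fun n => qn (psi n) y ord0 c) @ \oo --> QD y ord0 c.
Proof.
move=> [m [z ->]]; rewrite /QD mxE.
have := @psi_cvg (pickle (((m, z), Some c) : Ity)).
by rewrite /aseq pickleK.
Qed.

Lemma cvgSD y : grid y -> (fun n => sn (psi n) y) @ \oo --> SD y.
Proof.
move=> [m [z ->]]; rewrite /SD.
have := @psi_cvg (pickle (((m, z), None) : Ity)).
by rewrite /aseq pickleK.
Qed.

Lemma QD_Gamma y : grid y -> Gamma (QD y).
Proof.
move=> gy; apply: (closed_rV_lim hGc (v := fun n => qn (psi n) y)).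
  by move=> n; apply: hmech; apply: grid_orthant.
by move=> i; apply: cvgQD.
Qed.

Lemma cvg_dotQD y v : grid y ->
  (fun n => dotv (qn (psi n) y) v) @ \oo --> dotv (QD y) v.
Proof.
move=> gy; apply: (dotv_cvg (b := fun _ => v)) => i; first exact: cvgQD.
exact: cvg_cst.
Qed.

Lemma QD_IC y y' : grid y -> grid y' ->
  dotv (QD y') y - SD y' <= dotv (QD y) y - SD y.
Proof.
move=> gy gy'.
apply: (le_cvg_lim (cvgB (@cvg_dotQD y' y gy') (cvgSD gy'))
                   (cvgB (@cvg_dotQD y y gy) (cvgSD gy))).
by move=> n; apply: hIC; apply: grid_orthant.
Qed.

Lemma QD_IR y : grid y -> 0 <= dotv (QD y) y - SD y.
Proof.
move=> gy; apply: (le_cvg_lim (cvg_cst 0) (cvgB (@cvg_dotQD y y gy) (cvgSD gy))).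
by move=> n; apply: hIR; apply: grid_orthant.
Qed.

Lemma QD_mono y y' : grid y -> grid y' -> vle y y' -> vle (QD y) (QD y').
Proof.
move=> gy gy' hyy' c; apply: (le_cvg_lim (@cvgQD y c gy) (@cvgQD y' c gy')).
by move=> n; apply: hmono => //; apply: grid_orthant.
Qed.

Lemma SD_mono y y' : grid y -> grid y' -> vle y y' -> SD y <= SD y'.
Proof.
move=> gy gy' hyy'; apply: (le_cvg_lim (cvgSD gy) (cvgSD gy')).
move=> n; apply: (pay_mono (hmech _) (hIC _) (hmono _)) => //;
  exact: grid_orthant.
Qed.

Lemma QD_ge0 y c : grid y -> 0 <= QD y ord0 c.
Proof. by move=> gy; apply: hGpos; apply: QD_Gamma. Qed.

Lemma SD_ge0 y : grid y -> 0 <= SD y.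
Proof.
move=> gy; apply: (le_cvg_lim (cvg_cst 0) (cvgSD gy)) => n.
by apply: sn_ge0; apply: grid_orthant.
Qed.

Definition qf (x : 'rV[R]_k) : 'rV[R]_k :=
  \row_c limn (fun m => QD (rmv m x) ord0 c).
Definition sf (x : 'rV[R]_k) : R := limn (fun m => SD (rmv m x)).

Lemma rmv_anti (x : 'rV[R]_k) n m : orthant x -> (n <= m)%N -> vle (rmv m x) (rmv n x).
Proof.
move=> hx; elim: m => [|m IH]; first by rewrite leqn0 => /eqP -> i.
rewrite leq_eqVlt => /orP [/eqP -> i //|]; rewrite ltnS => /IH h i.
exact: le_trans (rmv_S _ hx i) (h i).
Qed.

Lemma cvg_qf (x : 'rV[R]_k) c : orthant x ->
  (fun m => QD (rmv m x) ord0 c) @ \oo --> qf x ord0 c.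
Proof.
move=> hx; rewrite /qf mxE; apply: nonincreasing_is_cvgn.
  by move=> n m nm; exact: (QD_mono (grid_rmv _ _) (grid_rmv _ _) (rmv_anti hx nm) c).
by exists 0 => _ [m _ <-]; apply: QD_ge0; apply: grid_rmv.
Qed.

Lemma cvg_sf (x : 'rV[R]_k) : orthant x -> (fun m => SD (rmv m x)) @ \oo --> sf x.
Proof.
move=> hx; rewrite /sf; apply: nonincreasing_is_cvgn.
  by move=> n m nm; apply: (SD_mono (grid_rmv _ _) (grid_rmv _ _) (rmv_anti hx nm)).
by exists 0 => _ [m _ <-]; apply: SD_ge0; apply: grid_rmv.
Qed.

Lemma qf_Gamma (x : 'rV[R]_k) : orthant x -> Gamma (qf x).
Proof.
move=> hx; apply: (closed_rV_lim hGc (v := fun m => QD (rmv m x))).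
  by move=> m; apply: QD_Gamma; apply: grid_rmv.
by move=> i; apply: cvg_qf.
Qed.

Lemma qf_mech : is_mechanism Gamma qf sf.
Proof. by move=> x hx; apply: qf_Gamma. Qed.

Lemma qf_IC : IC qf sf.
Proof.
move=> x y hx hy.
apply: (le_cvg_lim
  (cvgB (dotv_cvg (fun i => @cvg_qf y i hy) (fun i => @rmv_cvg R k x i hx)) (cvg_sf hy))
  (cvgB (dotv_cvg (fun i => @cvg_qf x i hx) (fun i => @rmv_cvg R k x i hx)) (cvg_sf hx))).
by move=> m; apply: QD_IC; apply: grid_rmv.
Qed.

Lemma qf_IR : IR qf sf.
Proof.
move=> x hx.
apply: (le_cvg_lim (cvg_cst 0)
  (cvgB (dotv_cvg (fun i => @cvg_qf x i hx) (fun i => @rmv_cvg R k x i hx)) (cvg_sf hx))) => m.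
by apply: QD_IR; apply: grid_rmv.
Qed.

Lemma qf_mono : alloc_monotonic qf.
Proof.
move=> x y hx hy hxy c; apply: (le_cvg_lim (@cvg_qf x c hx) (@cvg_qf y c hy)) => m.
by apply: (QD_mono (grid_rmv _ _) (grid_rmv _ _) (rmv_mono m hx hxy) c).
Qed.

Hypothesis hB0 : 0 <= B.

Lemma SD_le y : grid y -> SD y <= B * \sum_(i < k) y ord0 i.
Proof.
move=> gy; apply: (le_cvg_lim (cvgSD gy) (cvg_cst _)) => n.
by apply: sn_le; apply: grid_orthant.
Qed.

Lemma bound_rmv m (x : 'rV[R]_k) : orthant x ->
  B * \sum_(i < k) rmv m x ord0 i <= B * (\sum_(i < k) x ord0 i) + B * k%:R.
Proof.
move=> hx; rewrite -mulrDr; apply: ler_wpM2l => //.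
have -> : (k%:R : R) = \sum_(i < k) 1 by rewrite sumr_const card_ord.
rewrite -big_split /=; apply: ler_sum => i _; exact: rmv_le1.
Qed.

Variables (d : measure_display) (Omega : measurableType d) (P : probability Omega R).
Variable X : Omega -> 'rV[R]_k.
Hypothesis hXmeas : forall i : 'I_k, measurable_fun setT (fun w => X w ord0 i).
Hypothesis hXpos : forall w, orthant (X w).
Hypothesis hXint : (\int[P]_w (`|X w|)%:E < +oo)%E.
Variable m0 : R.
Hypothesis hsm : forall n, measurable_fun setT (fun w => sn n (X w)).
Hypothesis hrev : forall n, ((m0 - (n.+1%:R)^-1)%:E <= revenue P X (sn n))%E.

Lemma sf_meas : measurable_fun setT (fun w => sf (X w)).
Proof.
apply: (@measurable_fun_cvg _ _ _ _ (fun m w => SD (rmv m (X w)))).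
  by move=> m; exact: (meas_grid hXmeas hXpos m (fun z => SD (gpt R m z))).
by move=> w _; apply: cvg_sf.
Qed.

Lemma stepA m : ((m0)%:E <= \int[P]_w (SD (rmv m (X w)))%:E)%E.
Proof.
apply: (@dom_lim _ _ _ P (fun n w => sn (psi n) (rmv m (X w)))
  (fun w => SD (rmv m (X w)))
  (fun w => B * (\sum_(i < k) X w ord0 i) + B * k%:R)
  (fun n => m0 - (n.+1%:R)^-1) m0).
- by move=> n; exact: (meas_grid hXmeas hXpos m (fun z => sn (psi n) (gpt R m z))).
- by move=> w; apply: cvgSD; apply: grid_rmv.
- exact: G_int.
- move=> n w; apply/andP; split; first by apply: sn_ge0; apply: grid_orthant; apply: grid_rmv.
  apply: le_trans (bound_rmv m (hXpos w)).
  by apply: sn_le; apply: grid_orthant; apply: grid_rmv.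
- move=> n; apply: (@le_trans _ _ ((m0 - ((psi n).+1%:R)^-1)%:E)).
    rewrite lee_fin lerD2l lerN2 lef_pV2 ?posrE // ler_nat ltnS; exact: psi_ge.
  apply: le_trans (hrev (psi n)) _; rewrite /revenue; apply: ge0_le_integral => //.
  + by move=> w _; rewrite lee_fin; apply: sn_ge0.
  + by apply/measurable_EFinP; exact: hsm.
  + by apply/measurable_EFinP; exact: (meas_grid hXmeas hXpos m (fun z => sn (psi n) (gpt R m z))).
  + move=> w _; rewrite lee_fin.
    apply: (pay_mono (hmech _) (hIC _) (hmono _)) => //.
      by apply: grid_orthant; apply: grid_rmv.
    exact: rmv_ge.
- rewrite -[X in _ --> X]subr0; apply: cvgB; first exact: cvg_cst.
  exact: cvg_harmonic.
Qed.

Lemma stepC : ((m0)%:E <= \int[P]_w (sf (X w))%:E)%E.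
Proof.
apply: (@dom_lim _ _ _ P (fun m w => SD (rmv m (X w))) (fun w => sf (X w))
  (fun w => B * (\sum_(i < k) X w ord0 i) + B * k%:R) (fun _ => m0) m0).
- by move=> m; exact: (meas_grid hXmeas hXpos m (fun z => SD (gpt R m z))).
- by move=> w; apply: cvg_sf.
- exact: G_int.
- move=> m w; apply/andP; split; first by apply: SD_ge0; apply: grid_rmv.
  apply: le_trans (bound_rmv m (hXpos w)).
  by apply: SD_le; apply: grid_rmv.
- exact: stepA.
- exact: cvg_cst.
Qed.

Lemma construction_main :
  amon_admissible Gamma X qf sf /\ ((m0)%:E <= revenue P X sf)%E.
Proof.
split; last exact: stepC.
split; [exact: qf_mech|exact: qf_IC|exact: qf_IR|exact: qf_mono|exact: sf_meas].
Qed.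

End construction.

Unset Implicit Arguments. Set Strict Implicit. Set Printing Implicit Defensive.


Theorem theorem3 (R : realType) (k : nat) (hk : (0 < k)%N)
  (Gamma : set 'rV[R]_k)
  (hGc : compact Gamma) (hGne : Gamma !=set0) (hGpos : Gamma `<=` orthant (k:=k))
  (d : measure_display) (Omega : measurableType d) (P : probability Omega R)
  (X : Omega -> 'rV[R]_k)
  (hXmeas : forall i : 'I_k, measurable_fun setT (fun w => X w ord0 i))
  (hXpos : forall w, orthant (X w))
  (hXint : (\int[P]_w (`|X w|)%:E < +oo)%E) :
  exists (q : 'rV[R]_k -> 'rV[R]_k) (s : 'rV[R]_k -> R),
    amon_admissible Gamma X q s /\ revenue P X s = AMonRev P Gamma X.
Proof.
have hGcl : closed Gamma by apply: compact_closed => //; exact: norm_hausdorff.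
have [B [hB0 hB]] : exists B : R, 0 <= B /\ forall g, Gamma g -> forall i, g ord0 i <= B.
  have [M0 [_ HM]] := compact_bounded hGc.
  have h1 : M0 < `|M0| + 1 by apply: le_lt_trans (ler_norm M0) _; rewrite ltrDl.
  have HB := HM _ h1.
  exists (`|M0| + 1); split; first by apply: addr_ge0.
  move=> g Gg i; apply: le_trans (ler_norm _) _.
  apply: le_trans (coord_le_norm _ _) _; exact: HB.
pose Gf w := B * (\sum_(i < k) X w ord0 i) + B * k%:R.
have iG : P.-integrable setT (fun w => (Gf w)%:E) := G_int hXmeas hXint B.
have Gfin : (\int[P]_w (Gf w)%:E < +oo)%E.
  have /integrableP [mG h] := iG.
  apply: le_lt_trans h; apply: le_trans (lee_abs _) _.
  exact: le_abse_integral.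
pose nz (s : 'rV[R]_k -> R) := fun x => s x - s 0.
have key : forall q s, amon_admissible Gamma X q s ->
    [/\ (revenue P X s <= revenue P X (nz s))%E,
        (revenue P X (nz s) <= \int[P]_w (Gf w)%:E)%E &
        amon_admissible Gamma X q (nz s)].
  move=> q s [hm hic hir hmo hms].
  have [hm' hic' hir'] := normalize_ok hGpos hm hic hir.
  have hms' : measurable_fun setT (fun w => s (X w) - s 0).
    by apply: measurable_funB => //; exact: measurable_cst.
  have s'0 x : orthant x -> 0 <= s x - s 0.
    move=> hx; have := pay_mono hm' hic' hmo (@orthant0 R k) hx.
    rewrite subrr; apply => i; rewrite mxE; exact: hx.
  have s'G w : s (X w) - s 0 <= Gf w.
    have := hir' (X w) (hXpos w); rewrite subr_ge0 => h.
    have hb : dotv (q (X w)) (X w) <= B * \sum_(i < k) X w ord0 i.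
      by apply: dotv_bound => // i; apply: hB; apply: hm.
    apply: le_trans h _; apply: le_trans hb _.
    by rewrite /Gf lerDl; apply: mulr_ge0.
  have Gf0 w : 0 <= Gf w := le_trans (s'0 _ (hXpos w)) (s'G w).
  have i' : P.-integrable setT (fun w => (nz s (X w))%:E).
    apply: le_integrable iG => //; first exact/measurable_EFinP.
    move=> w _; rewrite !gee0_abs ?lee_fin ?s'G ?Gf0 ?s'0 //.
  have i : P.-integrable setT (fun w => (s (X w))%:E).
    apply: (eq_integrable measurableT (fun w => (nz s (X w))%:E + (EFin \o cst (s 0)) w)).
      by move=> w _ /=; rewrite -EFinD /nz subrK.
    apply: integrableD => //; exact: finite_measure_integrable_cst.
  split.
  - rewrite /revenue; apply: le_integral => // w _.
    by rewrite lee_fin /nz lerDl oppr_ge0; exact: (s0_le0 hir).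
  - rewrite /revenue; apply: ge0_le_integral => //.
    + by move=> w _; rewrite lee_fin s'0.
    + exact/measurable_EFinP.
    + by case/integrableP: iG.
    + by move=> w _; rewrite lee_fin s'G.
  - by split.
have [g0 Gg0] := hGne.
have adm0 : amon_admissible Gamma X (fun _ => g0) (fun _ => 0).
  split.
  - by move=> x _.
  - by move=> x y _ _; rewrite lexx.
  - by move=> x hx; rewrite subr0; apply: dotv_ge0 => //; apply: hGpos.
  - by move=> x y _ _ _ i; rewrite lexx.
  - exact: measurable_cst.
have rev0 : revenue P X (fun _ => 0) = 0%E by rewrite /revenue integral0_eq.
set M := AMonRev P Gamma X.
have M0 : (0 <= M)%E.
  rewrite -rev0; apply: ereal_sup_ubound; exists (fun _ => 0) => //.
  by exists (fun _ => g0).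
have Mub : (M <= \int[P]_w (Gf w)%:E)%E.
  apply: ge_ereal_sup => _ [s [q hq] <-].
  have [h1 h2 _] := key q s hq; exact: le_trans h1 h2.
have Mfin : M \is a fin_num by rewrite ge0_fin_numE // (le_lt_trans Mub Gfin).
set m0 := fine M.
have hM : M = m0%:E by rewrite /m0 fineK.
have approx : forall n, exists qs : ('rV[R]_k -> 'rV[R]_k) * ('rV[R]_k -> R),
    amon_admissible Gamma X qs.1 qs.2 /\ ((m0 - (n.+1%:R)^-1)%:E <= revenue P X qs.2)%E.
  move=> n; have : ((m0 - (n.+1%:R)^-1)%:E < M)%E.
    by rewrite hM lte_fin ltrBlDr ltrDl invr_gt0 ltr0n.
  move=> /ereal_sup_gt [_ [s [q hq] <-] hlt]; exists (q, s); split => //; exact: ltW.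
have [qs hqs] := choice approx.
pose qn n := (qs n).1.
pose sn n := nz (qs n).2.
have hadm : forall n, amon_admissible Gamma X (qn n) (sn n).
  by move=> n; have [_ _ h] := key _ _ (hqs n).1.
have hrev : forall n, ((m0 - (n.+1%:R)^-1)%:E <= revenue P X (sn n))%E.
  by move=> n; have [h1 _ _] := key _ _ (hqs n).1; exact: le_trans (hqs n).2 h1.
have hs0 : forall n, sn n 0 = 0 by move=> n; rewrite /sn /nz subrr.
have hmech n : is_mechanism Gamma (qn n) (sn n) by case: (hadm n).
have hIC n : IC (qn n) (sn n) by case: (hadm n).
have hIR n : IR (qn n) (sn n) by case: (hadm n).
have hmono n : alloc_monotonic (qn n) by case: (hadm n).
have hsm n : measurable_fun setT (fun w => sn n (X w)) by case: (hadm n).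
have fin : forall q s, amon_admissible Gamma X q s -> ((m0)%:E <= revenue P X s)%E ->
    exists q s, amon_admissible Gamma X q s /\ revenue P X s = M.
  move=> q s hq hr; exists q, s; split => //; apply/eqP; rewrite eq_le; apply/andP; split.
    by apply: ereal_sup_ubound; exists s => //; exists q.
  by rewrite hM.
have [adm rv] := construction_main hGpos hGcl hB hmech hIC hIR hmono hs0 hB0
  hXmeas hXpos hXint hsm hrev.
exact: fin _ _ adm rv.
Qed.
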